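(* Let $\alpha_L,\alpha_R,\mu_L,\mu_R,\gamma_{RL},\gamma_{LR}>0$ and consider on $\Sigma=\{(L,R): L\ge0,\ R\ge0,\ L+R\le1\}$ the system \[ \dot L=\alpha_L L C-\mu_L L+\gamma_{RL} R C,\qquad \dot R=\alpha_R R C-\mu_R R+\gamma_{LR} L C,\qquad C=1-L-R. \] Let $K=\begin{pmatrix}\alpha_L&\gamma_{RL}\\ \gamma_{LR}&\alpha_R\end{pmatrix}$, $M=\mathrm{diag}(\mu_L,\mu_R)$, let $\lambda_{\mathrm{PF}}>0$ be the Perron root of $M^{-1}K$, given explicitly by \[ \lambda_{\mathrm{PF}}=\frac12\left(\frac{\alpha_L}{\mu_L}+\frac{\alpha_R}{\mu_R}+\sqrt{\left(\frac{\alpha_L}{\mu_L}-\frac{\alpha_R}{\mu_R}\right)^2+\frac{4\gamma_{RL}\gamma_{LR}}{\mu_L\mu_R}}\right), \] and let $u=(u_1,u_2)^\top$ with $u_1,u_2>0$ be a corresponding positive eigenvector. An interior equilibrium is a point $(L^*,R^* )$ with $L^*>0$, $R^*>0$, $L^*+R^*<1$ at which both right-hand sides vanish. Then: (1) An interior equilibrium exists if and only if $\lambda_{\mathrm{PF}}>1$. (2) When it exists it is unique and given by \[C^*=\frac{1}{\lambda_{\mathrm{PF}}},\qquad (L^*,R^* )=\frac{1-C^*}{u_1+u_2}(u_1,u_2).\] (3) It is locally asymptotically stable. In the symmetric case $\alpha_L=\alpha_R=\alpha$, $\mu_L=\mu_R=\mu$, $\gamma_{LR}=\gamma_{RL}=\gamma$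 it is a stable node, or a stable star on the codimension-one locus $2\gamma\mu=\beta(\beta-\mu)$ where $\beta=\alpha+\gamma$; in the asymmetric case it is a stable node or a stable focus. *)

(* Defs.v *)
From Stdlib Require Import Reals.
From Coquelicot Require Import Coquelicot.
Open Scope R_scope.

Definition fL (aL mL gRL : R) (L Rr : R) : R :=
  aL * L * (1 - L - Rr) - mL * L + gRL * Rr * (1 - L - Rr).
Definition fR (aR mR gLR : R) (L Rr : R) : R :=
  aR * Rr * (1 - L - Rr) - mR * Rr + gLR * L * (1 - L - Rr).

Definition lamPF (aL aR mL mR gRL gLR : R) : R :=
  / 2 * (aL / mL + aR / mR +
         sqrt ((aL / mL - aR / mR) ^ 2 + 4 * gRL * gLR / (mL * mR))).

Definition interior_eq (aL aR mL mR gRL gLR : R) (L Rr : R) : Prop :=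
  0 < L /\ 0 < Rr /\ L + Rr < 1 /\
  fL aL mL gRL L Rr = 0 /\ fR aR mR gLR L Rr = 0.

Definition is_solution (aL aR mL mR gRL gLR : R) (x y : R -> R) : Prop :=
  forall t, 0 <= t ->
    is_derive x t (fL aL mL gRL (x t) (y t)) /\
    is_derive y t (fR aR mR gLR (x t) (y t)).

Definition dist2 (a b c d : R) : R := sqrt ((a - c) ^ 2 + (b - d) ^ 2).

Definition locally_asymptotically_stable (aL aR mL mR gRL gLR : R) (Ls Rs : R)
  : Prop :=
  (forall eps, 0 < eps -> exists delta, 0 < delta /\
     forall x y, is_solution aL aR mL mR gRL gLR x y ->
       dist2 (x 0) (y 0) Ls Rs < delta ->
       forall t, 0 <= t -> dist2 (x t) (y t) Ls Rs < eps) /\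
  (exists delta, 0 < delta /\
     forall x y, is_solution aL aR mL mR gRL gLR x y ->
       dist2 (x 0) (y 0) Ls Rs < delta ->
       is_lim x p_infty Ls /\ is_lim y p_infty Rs).

Definition J11 (aL mL gRL : R) (L Rr : R) : R :=
  aL * (1 - L - Rr) - aL * L - mL - gRL * Rr.
Definition J12 (aL gRL : R) (L Rr : R) : R :=
  - aL * L + gRL * (1 - L - Rr) - gRL * Rr.
Definition J21 (aR gLR : R) (L Rr : R) : R :=
  - aR * Rr + gLR * (1 - L - Rr) - gLR * L.
Definition J22 (aR mR gLR : R) (L Rr : R) : R :=
  aR * (1 - L - Rr) - aR * Rr - mR - gLR * L.

Definition mtr (a b c d : R) := a + d.
Definition mdet (a b c d : R) := a * d - b * c.
Definition mdisc (a b c d : R) := (mtr a b c d) ^ 2 - 4 * mdet a b c d.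

(* stable node: both eigenvalues real and negative (stars included) *)
Definition stable_node (a b c d : R) : Prop :=
  mtr a b c d < 0 /\ 0 < mdet a b c d /\ 0 <= mdisc a b c d.
Definition stable_star (a b c d : R) : Prop :=
  b = 0 /\ c = 0 /\ a = d /\ a < 0.
Definition stable_focus (a b c d : R) : Prop :=
  mtr a b c d < 0 /\ mdisc a b c d < 0.

(* Main.v *)
Require Import Defs.
From Stdlib Require Import Reals Lra Psatz Classical.
From Coquelicot Require Import Coquelicot.
Open Scope R_scope.

Lemma deriv_cont (h : R -> R) t l : is_derive h t l -> continuity_pt h t.
Proof.
  intro H. apply is_derive_Reals in H.
  apply derivable_continuous_pt. exists l. exact H.
Qed.

Lemma mono (h hd : R -> R) T : 0 <= T ->
  (forall t, 0 <= t <= T -> is_derive h t (hd t)) ->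
  (forall t, 0 < t < T -> hd t <= 0) -> h T <= h 0.
Proof.
  intros HT Hd Hn.
  destruct (MVT_gen h 0 T (fun x => Rmin (hd x) 0)) as [c [Hc Heq]].
  - intros x Hx. rewrite Rmin_left in Hx by lra. rewrite Rmax_right in Hx by lra.
    rewrite Rmin_left by (apply Hn; lra). apply Hd; lra.
  - intros x Hx. rewrite Rmin_left in Hx by lra. rewrite Rmax_right in Hx by lra.
    apply (deriv_cont h x (hd x)). apply Hd; lra.
  - assert (Rmin (hd c) 0 <= 0) by apply Rmin_r.
    assert (Rmin (hd c) 0 * (T - 0) <= 0). { apply Rmult_le_0_r; lra. }
    lra.
Qed.

Lemma barrier (W w : R -> R) (k m : R) : 0 <= k ->
  (forall t, 0 <= t -> is_derive W t (w t)) -> W 0 < m ->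
  (forall t, 0 <= t -> W t < m -> w t <= - k * W t) ->
  (forall t, 0 <= t -> 0 <= W t) ->
  forall t, 0 <= t -> W t * (1 + k * t) <= W 0.
Proof.
  intros Hk Hd H0 Hw Hpos t1 Ht1.
  set (h := fun t => W t * (1 + k * t)).
  set (hd := fun t => w t * (1 + k * t) + W t * k).
  assert (Hhd : forall t, 0 <= t -> is_derive h t (hd t)).
  { intros t Ht. unfold h, hd.
    eapply is_derive_ext. { intro. reflexivity. }
    evar (l : R). replace (w t * (1 + k * t) + W t * k) with l.
    - apply (is_derive_mult W (fun t => 1 + k * t)). apply Hd; auto.
      + apply (is_derive_plus (fun _ => 1) (fun t => k * t)).
        apply is_derive_const. apply is_derive_scal. apply is_derive_id.
      + intros; apply Rmult_comm.
    - unfold l. simpl. unfold plus, mult, zero, one; simpl. ring. }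
  assert (Hneg : forall t, 0 <= t -> W t < m -> hd t <= 0).
  { intros t Ht Hm. unfold hd. specialize (Hw t Ht Hm). specialize (Hpos t Ht).
    assert (0 <= k * t) by (apply Rmult_le_pos; lra).
    assert (w t * (1 + k * t) <= - k * W t * (1 + k * t)) by (apply Rmult_le_compat_r; lra).
    assert (0 <= k * t * (k * W t)) by (apply Rmult_le_pos; [lra| apply Rmult_le_pos; lra]).
    nra. }
  assert (Hh0 : h 0 = W 0) by (unfold h; ring).
  change (h t1 <= W 0). rewrite <- Hh0.
  set (E := fun s => 0 <= s <= t1 /\ forall u, 0 <= u <= s -> W u < m).
  assert (HE0 : E 0). { split. lra. intros u Hu. replace u with 0 by lra. auto. }
  assert (HEb : bound E). { exists t1. intros s [Hs _]. lra. }
  destruct (completeness E HEb (ex_intro _ 0 HE0)) as [s [Hub Hlub]].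
  assert (Hs0 : 0 <= s) by (apply Hub; auto).
  assert (Hs1 : s <= t1). { apply Hlub. intros x [Hx _]. lra. }
  assert (Hbelow : forall u, 0 <= u < s -> W u < m).
  { intros u Hu. destruct (classic (exists x, E x /\ u < x)) as [[x [[_ Hx] Hux]]|Hn].
    - apply Hx. lra.
    - exfalso. assert (s <= u). { apply Hlub. intros x Ex. apply Rnot_lt_le. intro. apply Hn. eauto. }
      lra. }
  assert (Hhs : h s <= h 0).
  { apply mono with hd; auto. intros. apply Hhd; lra. intros. apply Hneg; try lra. apply Hbelow; lra. }
  destruct (Req_dec s t1) as [<-|Hne]; auto.
  exfalso.
  assert (HWs : W s < m).
  { rewrite Hh0 in Hhs. unfold h in Hhs. specialize (Hpos s Hs0). assert (0 <= k * s) by (apply Rmult_le_pos; lra).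
    assert (0 <= W s * (k * s)) by (apply Rmult_le_pos; lra). nra. }
  destruct (deriv_cont W s (w s) (Hd s Hs0) (m - W s)) as [del [Hdel Hc]]; [lra|].
  set (s' := Rmin (s + del / 2) t1).
  assert (s < s'). { unfold s'. apply Rmin_glb_lt; lra. }
  assert (E s').
  { split. split. lra. unfold s'; apply Rmin_r.
    intros u Hu. destruct (Rlt_dec u s). apply Hbelow; lra.
    destruct (Req_dec u s) as [->|]. auto.
    assert (Hd' := Hc u). simpl in Hd'. unfold R_dist in Hd'.
    assert (u - s <= del/2). { assert (s' <= s + del/2) by apply Rmin_l. lra. }
    assert (Rabs (W u - W s) < m - W s).
    { apply Hd'. split. split. exact I. lra. simpl. unfold R_dist. rewrite Rabs_right; lra. }
    apply Rabs_def2 in H3. lra. }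
  assert (s' <= s) by (apply Hub; auto). lra.
Qed.

Definition Vf (al be ga p q : R) := al * p * p + be * p * q + ga * q * q.

Lemma Vf_derive al be ga (x y : R -> R) t dx dy :
  is_derive x t dx -> is_derive y t dy ->
  is_derive (fun t => Vf al be ga (x t) (y t)) t
    ((2 * al * x t + be * y t) * dx + (be * x t + 2 * ga * y t) * dy).
Proof.
  intros Hx Hy.
  assert (Hxx := is_derive_mult x x t dx dx Hx Hx Rmult_comm).
  assert (Hxy := is_derive_mult x y t dx dy Hx Hy Rmult_comm).
  assert (Hyy := is_derive_mult y y t dy dy Hy Hy Rmult_comm).
  apply (is_derive_scal _ _ al) in Hxx.
  apply (is_derive_scal _ _ be) in Hxy.
  apply (is_derive_scal _ _ ga) in Hyy.
  assert (H := is_derive_plus _ _ _ _ _ (is_derive_plus _ _ _ _ _ Hxx Hxy) Hyy).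
  eapply is_derive_ext.
  2: { replace ((2 * al * x t + be * y t) * dx + (be * x t + 2 * ga * y t) * dy)
       with (plus (plus (al * plus (mult dx (x t)) (mult (x t) dx))
          (be * plus (mult dx (y t)) (mult (x t) dy)))
       (ga * plus (mult dy (y t)) (mult (y t) dy))).
       exact H. unfold plus, mult; simpl. ring. }
  intro u. unfold Vf, plus, mult; simpl. ring.
Qed.

Lemma abs_lin u v p q : Rabs (u*p + v*q) <= (Rabs u + Rabs v) * (Rabs p + Rabs q).
Proof.
  eapply Rle_trans. apply Rabs_triang. rewrite !Rabs_mult.
  pose proof (Rabs_pos u). pose proof (Rabs_pos v). pose proof (Rabs_pos p). pose proof (Rabs_pos q).
  nra.
Qed.

Lemma s2_le p q : (Rabs p + Rabs q)^2 <= 2 * (p^2 + q^2).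
Proof.
  rewrite <- (pow2_abs p), <- (pow2_abs q).
  pose proof (pow2_ge_0 (Rabs p - Rabs q)). lra.
Qed.

Lemma key_ineq (a b c d G : R) (F1 F2 : R -> R -> R) :
  a + d < 0 -> 0 < a*d - b*c -> 0 < G ->
  (forall p q, Rabs (F1 p q - (a*p + b*q)) <= G * (Rabs p + Rabs q)^2) ->
  (forall p q, Rabs (F2 p q - (c*p + d*q)) <= G * (Rabs p + Rabs q)^2) ->
  let D := a*d - b*c in
  let al := D + d^2 + c^2 in let be := -2*(d*b + c*a) in let ga := D + b^2 + a^2 in
  let La := D + 2*(a^2+b^2+c^2+d^2) in
  let Kb := 2 * (Rabs al + Rabs be + Rabs ga) * G in
  let rho := - (a+d) * D / (2 * Kb) in
  let m := D * rho^2 / 2 in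
  let ka := - (a+d) * D / La in
  0 < m /\ 0 < ka /\ 0 < D /\ 0 < La /\
  (forall p q, D * (p^2+q^2) <= Vf al be ga p q) /\
  (forall p q, Vf al be ga p q <= La * (p^2+q^2)) /\
  (forall p q, Vf al be ga p q < m ->
     (2*al*p + be*q) * F1 p q + (be*p + 2*ga*q) * F2 p q <= - ka * Vf al be ga p q).
Proof.
  intros HT HD HG H1 H2 D al be ga La Kb rho m ka.
  assert (HD' : 0 < D) by exact HD. clear HD. rename HD' into HD.
  assert (HLa : 0 < La) by (unfold La; pose proof (pow2_ge_0 a); pose proof (pow2_ge_0 b); pose proof (pow2_ge_0 c); pose proof (pow2_ge_0 d); lra).
  assert (HKb : 0 < Kb).
  { unfold Kb. assert (0 < al) by (unfold al; pose proof (pow2_ge_0 c); pose proof (pow2_ge_0 d); lra). rewrite (Rabs_right al) by lra.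
    pose proof (Rabs_pos be). pose proof (Rabs_pos ga). nra. }
  assert (HTD : 0 < - (a+d) * D) by (apply Rmult_lt_0_compat; lra).
  assert (Hrho : 0 < rho) by (unfold rho; apply Rdiv_lt_0_compat; lra).
  assert (Hm : 0 < m) by (unfold m; apply Rdiv_lt_0_compat; [apply Rmult_lt_0_compat; [exact HD| nra]|lra]).
  assert (Hka : 0 < ka) by (unfold ka; apply Rdiv_lt_0_compat; lra).
  assert (Hlow : forall p q, D * (p^2+q^2) <= Vf al be ga p q).
  { intros p q. assert (Vf al be ga p q = D*(p^2+q^2) + (d*p - b*q)^2 + (-c*p+a*q)^2)
      by (unfold Vf, al, be, ga, D; ring).
    pose proof (pow2_ge_0 (d*p - b*q)). pose proof (pow2_ge_0 (-c*p+a*q)). lra. }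
  assert (Hup : forall p q, Vf al be ga p q <= La * (p^2+q^2)).
  { intros p q. assert (Vf al be ga p q = D*(p^2+q^2) + (d*p - b*q)^2 + (-c*p+a*q)^2)
      by (unfold Vf, al, be, ga, D; ring).
    assert ((d*p - b*q)^2 <= 2*(d^2+b^2)*(p^2+q^2)) by nra.
    assert ((-c*p + a*q)^2 <= 2*(c^2+a^2)*(p^2+q^2)) by nra.
    unfold La. nra. }
  repeat split; auto.
  intros p q HV.
  set (r2 := p^2+q^2). set (s := Rabs p + Rabs q).
  assert (Hs0 : 0 <= s) by (unfold s; pose proof (Rabs_pos p); pose proof (Rabs_pos q); lra).
  assert (Hs2 : s^2 <= 2 * r2) by apply s2_le.
  assert (Hr2 : r2 < rho^2/2).
  { specialize (Hlow p q). fold r2 in Hlow. unfold m in HV.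
    apply Rmult_lt_reg_l with D; [exact HD|]. lra. }
  assert (Hsr : s < rho) by nra.
  set (e1 := F1 p q - (a*p + b*q)). set (e2 := F2 p q - (c*p + d*q)).
  assert (He1 : Rabs e1 <= G * s^2) by apply H1.
  assert (He2 : Rabs e2 <= G * s^2) by apply H2.
  assert (Hl1 : Rabs (2*al*p + be*q) <= (2*Rabs al + Rabs be) * s).
  { eapply Rle_trans. apply abs_lin. rewrite Rabs_mult, (Rabs_right 2) by lra. unfold s; apply Req_le; ring. }
  assert (Hl2 : Rabs (be*p + 2*ga*q) <= (Rabs be + 2*Rabs ga) * s).
  { eapply Rle_trans. apply abs_lin. rewrite Rabs_mult, (Rabs_right 2) by lra. unfold s; apply Req_le; ring. }
  assert (Hn : Rabs ((2*al*p + be*q) * e1 + (be*p + 2*ga*q) * e2) <= Kb * s * s^2).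
  { eapply Rle_trans. apply Rabs_triang. rewrite !Rabs_mult.
    assert (Rabs (2*al*p + be*q) * Rabs e1 <= (2*Rabs al + Rabs be) * s * (G * s^2))
      by (apply Rmult_le_compat; auto using Rabs_pos).
    assert (Rabs (be*p + 2*ga*q) * Rabs e2 <= (Rabs be + 2*Rabs ga) * s * (G * s^2))
      by (apply Rmult_le_compat; auto using Rabs_pos).
    unfold Kb. nra. }
  assert (Hn2 : Kb * s * s^2 <= - (a+d) * D * r2).
  { assert (Kb * s * s^2 <= Kb * rho * (2 * r2)).
    { apply Rmult_le_compat; try nra. }
    unfold rho in H. replace (Kb * (- (a + d) * D / (2 * Kb)) * (2 * r2)) with (- (a+d) * D * r2) in H
      by (field; lra). exact H. }
  assert (Hid : (2*al*p + be*q) * F1 p q + (be*p + 2*ga*q) * F2 p q =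
     2 * (a+d) * D * r2 + ((2*al*p + be*q) * e1 + (be*p + 2*ga*q) * e2))
    by (unfold e1, e2, r2, al, be, ga, D; ring).
  rewrite Hid.
  pose proof (Rle_abs ((2*al*p + be*q) * e1 + (be*p + 2*ga*q) * e2)).
  assert (- ka * Vf al be ga p q >= (a+d) * D * r2).
  { specialize (Hup p q). fold r2 in Hup. unfold ka.
    replace (- (- (a + d) * D / La) * Vf al be ga p q) with ((a+d)*D * (Vf al be ga p q / La)) by (field; lra).
    assert (Vf al be ga p q / La <= r2).
    { apply Rmult_le_reg_l with La; auto. replace (La * (Vf al be ga p q / La)) with (Vf al be ga p q) by (field; lra). lra. }
    nra. }
  lra.
Qed.

Lemma sq_lt x e : 0 < e -> x ^ 2 < e ^ 2 -> Rabs x < e.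
Proof.
  intros He H. rewrite <- (pow2_abs x) in H. pose proof (Rabs_pos x).
  destruct (Rlt_le_dec (Rabs x) e); auto. nra.
Qed.

Lemma lyap (a b c d G : R) (F1 F2 : R -> R -> R) :
  a + d < 0 -> 0 < a*d - b*c -> 0 < G ->
  (forall p q, Rabs (F1 p q - (a*p + b*q)) <= G * (Rabs p + Rabs q)^2) ->
  (forall p q, Rabs (F2 p q - (c*p + d*q)) <= G * (Rabs p + Rabs q)^2) ->
  (forall eps, 0 < eps -> exists delta, 0 < delta /\ forall x y : R -> R,
     (forall t, 0 <= t -> is_derive x t (F1 (x t) (y t)) /\ is_derive y t (F2 (x t) (y t))) ->
     sqrt (x 0 ^2 + y 0 ^2) < delta -> forall t, 0 <= t -> sqrt (x t ^2 + y t ^2) < eps) /\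
  (exists delta, 0 < delta /\ forall x y : R -> R,
     (forall t, 0 <= t -> is_derive x t (F1 (x t) (y t)) /\ is_derive y t (F2 (x t) (y t))) ->
     sqrt (x 0 ^2 + y 0 ^2) < delta -> is_lim x p_infty 0 /\ is_lim y p_infty 0).
Proof.
  intros HT HD HG H1 H2.
  destruct (key_ineq a b c d G F1 F2 HT HD HG H1 H2) as [Hm [Hka [HD' [HLa [Hlow [Hup Hkey]]]]]].
  set (D := a*d - b*c) in *.
  set (al := D + d^2 + c^2) in *. set (be := -2*(d*b + c*a)) in *. set (ga := D + b^2 + a^2) in *.
  set (La := D + 2*(a^2+b^2+c^2+d^2)) in *.
  set (Kb := 2 * (Rabs al + Rabs be + Rabs ga) * G) in *.
  set (rho := - (a+d) * D / (2 * Kb)) in *.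
  set (m := D * rho^2 / 2) in *.
  set (ka := - (a+d) * D / La) in *.
  clearbody D al be ga La Kb rho m ka.
  assert (Hcore : forall x y : R -> R,
     (forall t, 0 <= t -> is_derive x t (F1 (x t) (y t)) /\ is_derive y t (F2 (x t) (y t))) ->
     Vf al be ga (x 0) (y 0) < m ->
     forall t, 0 <= t -> Vf al be ga (x t) (y t) * (1 + ka * t) <= Vf al be ga (x 0) (y 0)).
  { intros x y Hs H0.
    apply (barrier (fun t => Vf al be ga (x t) (y t))
             (fun t => (2 * al * x t + be * y t) * F1 (x t) (y t) + (be * x t + 2 * ga * y t) * F2 (x t) (y t))
             ka m); auto; try lra.
    - intros t Ht. destruct (Hs t Ht). apply Vf_derive; auto.
    - intros t Ht. pose proof (Hlow (x t) (y t)). pose proof (pow2_ge_0 (x t)). pose proof (pow2_ge_0 (y t)). nra. }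
  assert (Hinit : forall x y : R -> R, forall mu, 0 < mu ->
     sqrt (x 0 ^2 + y 0 ^2) < sqrt (mu / (2 * La)) -> Vf al be ga (x 0) (y 0) < mu).
  { intros x y mu Hmu Hlt. apply sqrt_lt_0_alt in Hlt.
    pose proof (Hup (x 0) (y 0)).
    assert (La * (x 0 ^2 + y 0 ^2) < La * (mu / (2 * La))) by (apply Rmult_lt_compat_l; auto).
    replace (La * (mu / (2 * La))) with (mu / 2) in H0 by (field; lra). lra. }
  assert (Hdec : forall x y : R -> R,
     (forall t, 0 <= t -> is_derive x t (F1 (x t) (y t)) /\ is_derive y t (F2 (x t) (y t))) ->
     Vf al be ga (x 0) (y 0) < m ->
     forall t, 0 <= t -> D * (x t ^2 + y t ^2) <= Vf al be ga (x 0) (y 0) / (1 + ka * t)).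
  { intros x y Hs H0 t Ht. assert (0 <= ka * t) by (apply Rmult_le_pos; lra).
    apply Rle_trans with (Vf al be ga (x t) (y t)). apply Hlow.
    apply Rmult_le_reg_r with (1 + ka * t). lra.
    unfold Rdiv. rewrite Rmult_assoc, Rinv_l, Rmult_1_r by lra. apply Hcore; auto. }
  split.
  - intros eps Heps.
    set (mu := Rmin m (D * eps^2)).
    assert (Hmu : 0 < mu) by (unfold mu; apply Rmin_glb_lt; [lra| apply Rmult_lt_0_compat; [lra| apply pow_lt; lra]]).
    exists (sqrt (mu / (2 * La))). split.
    { apply sqrt_lt_R0. apply Rdiv_lt_0_compat; lra. }
    intros x y Hs H0 t Ht.
    assert (HV0 : Vf al be ga (x 0) (y 0) < mu) by (apply Hinit; auto).
    assert (HVm : Vf al be ga (x 0) (y 0) < m) by (pose proof (Rmin_l m (D*eps^2)); fold mu in H; lra).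
    assert (HVe : Vf al be ga (x 0) (y 0) < D * eps^2) by (pose proof (Rmin_r m (D*eps^2)); fold mu in H; lra).
    pose proof (Hdec x y Hs HVm t Ht).
    assert (0 <= ka * t) by (apply Rmult_le_pos; lra).
    assert (Vf al be ga (x 0) (y 0) / (1 + ka * t) <= Vf al be ga (x 0) (y 0)).
    { pose proof (Hlow (x 0) (y 0)). pose proof (pow2_ge_0 (x 0)). pose proof (pow2_ge_0 (y 0)).
      assert (0 <= Vf al be ga (x 0) (y 0)) by nra.
      apply Rmult_le_reg_r with (1 + ka * t). lra.
      unfold Rdiv. rewrite Rmult_assoc, Rinv_l, Rmult_1_r by lra. nra. }
    assert (x t ^2 + y t ^2 < eps^2) by nra.
    rewrite <- (sqrt_pow2 eps) by lra. apply sqrt_lt_1_alt. split; auto.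
    pose proof (pow2_ge_0 (x t)). pose proof (pow2_ge_0 (y t)). lra.
  - exists (sqrt (m / (2 * La))). split.
    { apply sqrt_lt_R0. apply Rdiv_lt_0_compat; lra. }
    intros x y Hs H0.
    assert (HVm : Vf al be ga (x 0) (y 0) < m) by (apply Hinit; auto).
    set (V0 := Vf al be ga (x 0) (y 0)).
    assert (HV0 : 0 <= V0).
    { pose proof (Hlow (x 0) (y 0)). pose proof (pow2_ge_0 (x 0)). pose proof (pow2_ge_0 (y 0)). unfold V0. nra. }
    assert (Hsmall : forall eps : posreal, forall t, V0 / (D * eps^2 * ka) < t ->
               x t ^2 < eps^2 /\ y t ^2 < eps^2).
    { intros eps t Ht.
      assert (He : 0 < eps) by apply cond_pos.
      assert (Hp : 0 < D * eps^2 * ka) by (apply Rmult_lt_0_compat; [apply Rmult_lt_0_compat; [lra| apply pow_lt; lra]|lra]).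
      assert (Ht0 : 0 <= t). { apply Rle_trans with (V0 / (D * eps ^ 2 * ka)).
         apply Rdiv_le_0_compat; lra. lra. }
      pose proof (Hdec x y Hs HVm t Ht0). fold V0 in H.
      assert (0 <= ka * t) by (apply Rmult_le_pos; lra).
      assert (V0 < D * eps^2 * ka * t).
      { apply Rmult_lt_compat_l with (r := D * eps^2 * ka) in Ht; auto.
        replace (D * eps ^ 2 * ka * (V0 / (D * eps ^ 2 * ka))) with V0 in Ht by (field; lra). lra. }
      assert (V0 / (1 + ka * t) < D * eps^2).
      { apply Rmult_lt_reg_r with (1 + ka * t). lra.
        unfold Rdiv. rewrite Rmult_assoc, Rinv_l, Rmult_1_r by lra. nra. }
      pose proof (pow2_ge_0 (x t)). pose proof (pow2_ge_0 (y t)).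
      assert (x t ^2 + y t ^2 < eps^2).
      { apply Rmult_lt_reg_l with D; auto. lra. }
      split; lra. }
    split; apply is_lim_spec; intro eps; simpl; exists (V0 / (D * eps^2 * ka)); intros t Ht;
      destruct (Hsmall eps t Ht) as [Hx Hy]; rewrite Rminus_0_r;
      pose proof (cond_pos eps).
    + apply sq_lt; auto.
    + apply sq_lt; auto.
Qed.

Lemma jac_props aL aR mL mR gRL gLR L Rr :
  0 < aL -> 0 < aR -> 0 < mL -> 0 < mR -> 0 < gRL -> 0 < gLR ->
  interior_eq aL aR mL mR gRL gLR L Rr ->
  J11 aL mL gRL L Rr < 0 /\ J22 aR mR gLR L Rr < 0 /\
  0 < J11 aL mL gRL L Rr * J22 aR mR gLR L Rr - J12 aL gRL L Rr * J21 aR gLR L Rr.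
Proof.
  intros haL haR hmL hmR hgRL hgLR [HL [HR [HC [E1 E2]]]].
  unfold fL, fR in *. unfold J11, J12, J21, J22.
  set (C := 1 - L - Rr) in *.
  assert (HC0 : 0 < C) by (unfold C; lra).
  set (s1 := aL * L + gRL * Rr). set (s2 := aR * Rr + gLR * L).
  assert (Ha : L * (aL * C - aL * L - mL - gRL * Rr) = - gRL * Rr * C - L * s1)
    by (unfold s1; lra).
  assert (Hd : Rr * (aR * C - aR * Rr - mR - gLR * L) = - gLR * L * C - Rr * s2)
    by (unfold s2; lra).
  assert (Hs1 : 0 < s1) by (unfold s1; nra).
  assert (Hs2 : 0 < s2) by (unfold s2; nra).
  assert (Hneg1 : aL * C - aL * L - mL - gRL * Rr < 0).
  { apply Rmult_lt_reg_l with L; auto. rewrite Ha.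
    assert (0 < gRL * Rr * C) by (repeat apply Rmult_lt_0_compat; lra).
    assert (0 < L * s1) by (apply Rmult_lt_0_compat; lra). lra. }
  assert (Hneg2 : aR * C - aR * Rr - mR - gLR * L < 0).
  { apply Rmult_lt_reg_l with Rr; auto. rewrite Hd.
    assert (0 < gLR * L * C) by (repeat apply Rmult_lt_0_compat; lra).
    assert (0 < Rr * s2) by (apply Rmult_lt_0_compat; lra). lra. }
  repeat split; auto.
  apply Rmult_lt_reg_l with (L * Rr). nra.
  rewrite Rmult_0_r.
  replace (L * Rr * ((aL * C - aL * L - mL - gRL * Rr) * (aR * C - aR * Rr - mR - gLR * L) -
    (- aL * L + gRL * C - gRL * Rr) * (- aR * Rr + gLR * C - gLR * L)))
  with ((L * (aL * C - aL * L - mL - gRL * Rr)) * (Rr * (aR * C - aR * Rr - mR - gLR * L)) -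
    L * Rr * (gRL * C - s1) * (gLR * C - s2)) by (unfold s1, s2; ring).
  rewrite Ha, Hd.
  replace ((- gRL * Rr * C - L * s1) * (- gLR * L * C - Rr * s2) - L * Rr * (gRL * C - s1) * (gLR * C - s2))
    with (gRL * Rr * C * s2 * (Rr + L) + gLR * L * C * s1 * (L + Rr)) by ring.
  assert (0 < gRL * Rr * C * s2 * (Rr + L)) by (repeat apply Rmult_lt_0_compat; lra).
  assert (0 < gLR * L * C * s1 * (L + Rr)) by (repeat apply Rmult_lt_0_compat; lra).
  lra.
Qed.

Lemma nl_bound u v p q : 0 < u -> 0 < v ->
  Rabs ((u * p + v * q) * (p + q)) <= (u + v) * (Rabs p + Rabs q) ^ 2.
Proof.
  intros Hu Hv. rewrite Rabs_mult.
  pose proof (abs_lin u v p q). rewrite (Rabs_right u), (Rabs_right v) in H by lra.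
  assert (Rabs (p + q) <= Rabs p + Rabs q) by apply Rabs_triang.
  pose proof (Rabs_pos (u*p+v*q)). pose proof (Rabs_pos (p+q)).
  pose proof (Rabs_pos p). pose proof (Rabs_pos q).
  replace ((u + v) * (Rabs p + Rabs q) ^ 2) with (((u + v) * (Rabs p + Rabs q)) * (Rabs p + Rabs q)) by ring.
  apply Rmult_le_compat; auto.
Qed.

Lemma lim_shift (x : R -> R) l : is_lim (fun t => x t - l) p_infty 0 -> is_lim x p_infty l.
Proof.
  intro H. apply is_lim_spec in H. apply is_lim_spec. intro eps.
  destruct (H eps) as [M HM]. exists M. intros t Ht. specialize (HM t Ht).
  simpl in *. rewrite Rminus_0_r in HM. exact HM.
Qed.

Lemma las aL aR mL mR gRL gLR L Rr :
  0 < aL -> 0 < aR -> 0 < mL -> 0 < mR -> 0 < gRL -> 0 < gLR ->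
  interior_eq aL aR mL mR gRL gLR L Rr ->
  locally_asymptotically_stable aL aR mL mR gRL gLR L Rr.
Proof.
  intros haL haR hmL hmR hgRL hgLR Hi.
  destruct (jac_props aL aR mL mR gRL gLR L Rr haL haR hmL hmR hgRL hgLR Hi) as [Ha [Hd HD]].
  destruct Hi as [HL [HR [HC [E1 E2]]]].
  set (F1 := fun p q => fL aL mL gRL (L + p) (Rr + q)).
  set (F2 := fun p q => fR aR mR gLR (L + p) (Rr + q)).
  assert (HG : 0 < aL + gRL + gLR + aR) by lra.
  destruct (lyap (J11 aL mL gRL L Rr) (J12 aL gRL L Rr) (J21 aR gLR L Rr) (J22 aR mR gLR L Rr)
     (aL + gRL + gLR + aR) F1 F2) as [Hst Hat]; try lra.
  - intros p q. unfold F1.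
    replace (fL aL mL gRL (L + p) (Rr + q) - (J11 aL mL gRL L Rr * p + J12 aL gRL L Rr * q))
      with (fL aL mL gRL L Rr - (aL * p + gRL * q) * (p + q))
      by (unfold fL, J11, J12; ring).
    rewrite E1, Rminus_0_l, Rabs_Ropp.
    eapply Rle_trans. apply nl_bound; auto.
    apply Rmult_le_compat_r. apply pow2_ge_0. lra.
  - intros p q. unfold F2.
    replace (fR aR mR gLR (L + p) (Rr + q) - (J21 aR gLR L Rr * p + J22 aR mR gLR L Rr * q))
      with (fR aR mR gLR L Rr - (gLR * p + aR * q) * (p + q))
      by (unfold fR, J21, J22; ring).
    rewrite E2, Rminus_0_l, Rabs_Ropp.
    eapply Rle_trans. apply nl_bound; auto.
    apply Rmult_le_compat_r. apply pow2_ge_0. lra.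
  - assert (Hsol : forall x y, is_solution aL aR mL mR gRL gLR x y ->
      forall t, 0 <= t -> is_derive (fun t => x t - L) t (F1 (x t - L) (y t - Rr)) /\
                          is_derive (fun t => y t - Rr) t (F2 (x t - L) (y t - Rr))).
    { intros x y Hs t Ht. destruct (Hs t Ht) as [Hx Hy]. unfold F1, F2.
      replace (L + (x t - L)) with (x t) by ring. replace (Rr + (y t - Rr)) with (y t) by ring.
      split.
      - assert (H := is_derive_minus x (fun _ => L) t _ _ Hx (is_derive_const L t)).
        simpl in H. unfold minus, plus, opp, zero in H; simpl in H.
        eapply is_derive_ext; [| replace (fL aL mL gRL (x t) (y t)) with
          (fL aL mL gRL (x t) (y t) + - 0) by ring; exact H].
        intro; simpl; unfold minus, plus, opp; simpl. ring.
      - assert (H := is_derive_minus y (fun _ => Rr) t _ _ Hy (is_derive_const Rr t)).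
        simpl in H. unfold minus, plus, opp, zero in H; simpl in H.
        eapply is_derive_ext; [| replace (fR aR mR gLR (x t) (y t)) with
          (fR aR mR gLR (x t) (y t) + - 0) by ring; exact H].
        intro; simpl; unfold minus, plus, opp; simpl. ring. }
    split.
    + intros eps Heps. destruct (Hst eps Heps) as [del [Hdel Hdd]].
      exists del. split; auto. intros x y Hs H0 t Ht.
      unfold dist2 in *. apply (Hdd (fun t => x t - L) (fun t => y t - Rr)); [exact (Hsol x y Hs)|exact H0|exact Ht].

    + destruct Hat as [del [Hdel Hdd]]. exists del. split; auto.
      intros x y Hs H0.
      unfold dist2 in H0.
      destruct (Hdd (fun t => x t - L) (fun t => y t - Rr)) as [H1 H2]; [exact (Hsol x y Hs)|exact H0|].
      split; apply lim_shift; auto.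
Qed.

Lemma eq_lam (aL aR mL mR gRL gLR u1 u2 L Rr : R)
  (haL : 0 < aL) (haR : 0 < aR) (hmL : 0 < mL) (hmR : 0 < mR)
  (hgRL : 0 < gRL) (hgLR : 0 < gLR)
  (hu1 : 0 < u1) (hu2 : 0 < u2)
  (hev1 : aL / mL * u1 + gRL / mL * u2 = lamPF aL aR mL mR gRL gLR * u1) :
  interior_eq aL aR mL mR gRL gLR L Rr ->
  lamPF aL aR mL mR gRL gLR * (1 - L - Rr) = 1 /\ L * u2 = Rr * u1.
Proof.
  intros [HL [HR [HC [E1 E2]]]].
  set (C := 1 - L - Rr).
  assert (HC0 : 0 < C) by (unfold C; lra).
  set (s := / C). set (x := aL / mL). set (y := aR / mR).
  set (u := gRL * Rr / (mL * L)). set (v := gLR * L / (mR * Rr)).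
  assert (Hu0 : 0 < u) by (unfold u; apply Rdiv_lt_0_compat; apply Rmult_lt_0_compat; lra).
  assert (Hv0 : 0 < v) by (unfold v; apply Rdiv_lt_0_compat; apply Rmult_lt_0_compat; lra).
  assert (Hu : s - x = u).
  { assert (s - x - u = - fL aL mL gRL L Rr / (mL * L * C)).
    { unfold s, x, u, fL. fold C. field. repeat split; lra. }
    rewrite E1 in H. unfold Rdiv in H. rewrite Ropp_0, Rmult_0_l in H. lra. }
  assert (Hv : s - y = v).
  { assert (s - y - v = - fR aR mR gLR L Rr / (mR * Rr * C)).
    { unfold s, y, v, fR. fold C. field. repeat split; lra. }
    rewrite E2 in H. unfold Rdiv in H. rewrite Ropp_0, Rmult_0_l in H. lra. }
  assert (Huv : 4 * gRL * gLR / (mL * mR) = 4 * (u * v)).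
  { unfold u, v. field. repeat split; lra. }
  assert (Hlam : lamPF aL aR mL mR gRL gLR = s).
  { unfold lamPF. fold x y. rewrite Huv.
    replace ((x - y) ^ 2 + 4 * (u * v)) with ((u + v) ^ 2) by (rewrite <- Hu, <- Hv; ring).
    rewrite sqrt_pow2 by lra. rewrite <- Hu, <- Hv. field. }
  split.
  - rewrite Hlam. unfold s. fold C. field. lra.
  - rewrite Hlam in hev1. fold x in hev1.
    assert (gRL / mL * u2 = u * u1) by (rewrite <- Hu; lra).
    assert (L * u2 - Rr * u1 = (mL * L / gRL) * (gRL / mL * u2 - u * u1)).
    { unfold u. field. repeat split; lra. }
    rewrite H in H0. lra.
Qed.

Theorem theorem3p7 (aL aR mL mR gRL gLR u1 u2 : R)
  (haL : 0 < aL) (haR : 0 < aR) (hmL : 0 < mL) (hmR : 0 < mR)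
  (hgRL : 0 < gRL) (hgLR : 0 < gLR)
  (hu1 : 0 < u1) (hu2 : 0 < u2)
  (hev1 : aL / mL * u1 + gRL / mL * u2 = lamPF aL aR mL mR gRL gLR * u1)
  (hev2 : gLR / mR * u1 + aR / mR * u2 = lamPF aL aR mL mR gRL gLR * u2) :
  let lam := lamPF aL aR mL mR gRL gLR in
  (* (1) existence iff lambda_PF > 1 *)
  ((exists L Rr, interior_eq aL aR mL mR gRL gLR L Rr) <-> 1 < lam) /\
  (* (2) uniqueness and explicit formula *)
  (forall L Rr, interior_eq aL aR mL mR gRL gLR L Rr ->
     1 - L - Rr = / lam /\
     L = (1 - / lam) / (u1 + u2) * u1 /\
     Rr = (1 - / lam) / (u1 + u2) * u2) /\
  (* (3) stability and type *)
  (forall L Rr, interior_eq aL aR mL mR gRL gLR L Rr ->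
     let a := J11 aL mL gRL L Rr in
     let b := J12 aL gRL L Rr in
     let c := J21 aR gLR L Rr in
     let d := J22 aR mR gLR L Rr in
     locally_asymptotically_stable aL aR mL mR gRL gLR L Rr /\
     ((aL = aR /\ mL = mR /\ gLR = gRL) ->
        let beta := aL + gRL in
        (2 * gRL * mL = beta * (beta - mL) -> stable_star a b c d) /\
        (2 * gRL * mL <> beta * (beta - mL) ->
           stable_node a b c d /\ ~ stable_star a b c d)) /\
     (~ (aL = aR /\ mL = mR /\ gLR = gRL) ->
        stable_node a b c d \/ stable_focus a b c d)).
Proof.
  cbv zeta.
  set (lam := lamPF aL aR mL mR gRL gLR) in *.
  assert (P2 : forall L Rr, interior_eq aL aR mL mR gRL gLR L Rr ->
     1 - L - Rr = / lam /\
     L = (1 - / lam) / (u1 + u2) * u1 /\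
     Rr = (1 - / lam) / (u1 + u2) * u2).
  { intros L Rr Hi.
    destruct (eq_lam aL aR mL mR gRL gLR u1 u2 L Rr haL haR hmL hmR hgRL hgLR hu1 hu2 hev1 Hi)
      as [Hl Hx]. fold lam in Hl.
    assert (Hlam0 : lam <> 0) by (intro H; rewrite H in Hl; lra).
    assert (HC : 1 - L - Rr = / lam).
    { apply (Rmult_eq_reg_l lam); auto. rewrite Hl. field. auto. }
    rewrite <- HC. replace (1 - (1 - L - Rr)) with (L + Rr) by ring.
    split; auto. split.
    - apply (Rmult_eq_reg_l (u1 + u2)); [|lra]. field_simplify; [|lra]. lra.
    - apply (Rmult_eq_reg_l (u1 + u2)); [|lra]. field_simplify; [|lra]. lra. }
  split; [|split; [exact P2|]].
  - split.
    + intros [L [Rr Hi]].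
      destruct (eq_lam aL aR mL mR gRL gLR u1 u2 L Rr haL haR hmL hmR hgRL hgLR hu1 hu2 hev1 Hi)
        as [Hl _]. fold lam in Hl.
      destruct Hi as [HL [HR [HC _]]].
      destruct (Rle_lt_dec lam 1) as [Hle|]; auto.
      exfalso. assert (0 < 1 - L - Rr) by lra.
      destruct (Rle_lt_dec lam 0).
      * assert (lam * (1 - L - Rr) <= 0) by (apply Rmult_le_0_r; lra). lra.
      * assert (lam * (1 - L - Rr) <= 1 * (1 - L - Rr)) by (apply Rmult_le_compat_r; lra). lra.
    + intros Hlam.
      set (il := / lam).
      assert (Hil : il * lam = 1) by (unfold il; field; lra).
      assert (Hil0 : 0 < il) by (unfold il; apply Rinv_0_lt_compat; lra).
      assert (Hil1 : il < 1) by nra.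
      set (k := (1 - il) / (u1 + u2)).
      assert (Hk : 0 < k) by (unfold k; apply Rdiv_lt_0_compat; lra).
      assert (Hku : k * u1 + k * u2 = 1 - il) by (unfold k; field; lra).
      assert (H1' : aL * u1 + gRL * u2 = mL * lam * u1).
      { assert (aL * u1 + gRL * u2 = mL * (aL / mL * u1 + gRL / mL * u2)) by (field; lra).
        rewrite hev1 in H. lra. }
      assert (H2' : gLR * u1 + aR * u2 = mR * lam * u2).
      { assert (gLR * u1 + aR * u2 = mR * (gLR / mR * u1 + aR / mR * u2)) by (field; lra).
        rewrite hev2 in H. lra. }
      exists (k * u1), (k * u2).
      repeat split.
      * apply Rmult_lt_0_compat; lra.
      * apply Rmult_lt_0_compat; lra.
      * lra.
      * unfold fL. replace (1 - k * u1 - k * u2) with il by lra.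
        replace (aL * (k * u1) * il - mL * (k * u1) + gRL * (k * u2) * il)
          with (k * il * (aL * u1 + gRL * u2) - mL * k * u1) by ring.
        rewrite H1'.
        replace (k * il * (mL * lam * u1) - mL * k * u1) with (mL * k * u1 * (il * lam - 1)) by ring.
        rewrite Hil. ring.
      * unfold fR. replace (1 - k * u1 - k * u2) with il by lra.
        replace (aR * (k * u2) * il - mR * (k * u2) + gLR * (k * u1) * il)
          with (k * il * (gLR * u1 + aR * u2) - mR * k * u2) by ring.
        rewrite H2'.
        replace (k * il * (mR * lam * u2) - mR * k * u2) with (mR * k * u2 * (il * lam - 1)) by ring.
        rewrite Hil. ring.
  - intros L Rr Hi.
    destruct (jac_props aL aR mL mR gRL gLR L Rr haL haR hmL hmR hgRL hgLR Hi) as [Ha [Hd HD]].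
    split; [apply las; auto|].
    split.
    + intros [e1 [e2 e3]]. subst aR mR gLR.
      destruct Hi as [HL [HR [HC [E1 E2]]]].
      assert (HLR : L = Rr).
      { destruct (Req_dec L Rr) as [|Hne]; auto. exfalso.
        assert (Hdiff : fL aL mL gRL L Rr - fR aL mL gRL L Rr =
                 (aL * (1 - L - Rr) - mL - gRL * (1 - L - Rr)) * (L - Rr)) by (unfold fL, fR; ring).
        rewrite E1, E2 in Hdiff.
        assert (Hz : aL * (1 - L - Rr) - mL - gRL * (1 - L - Rr) = 0).
        { apply (Rmult_eq_reg_r (L - Rr)). lra. lra. }
        assert (fL aL mL gRL L Rr = gRL * (1 - L - Rr) * (L + Rr)).
        { unfold fL. replace (aL * L * (1 - L - Rr) - mL * L) with (L * (aL * (1 - L - Rr) - mL)) by ring.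
          replace (aL * (1 - L - Rr) - mL) with (gRL * (1 - L - Rr)) by lra. ring. }
        assert (0 < gRL * (1 - L - Rr) * (L + Rr)) by (repeat apply Rmult_lt_0_compat; lra).
        lra. }
      subst Rr.
      assert (Hbc : (aL + gRL) * (1 - L - L) - mL = 0).
      { apply (Rmult_eq_reg_l L); [|lra]. rewrite Rmult_0_r, <- E1. unfold fL. ring. }
      assert (Hid : 2 * (aL + gRL) * J12 aL gRL L L - (2 * gRL * mL - (aL + gRL) * ((aL + gRL) - mL))
                    = (2 * gRL + (aL + gRL)) * ((aL + gRL) * (1 - L - L) - mL)) by (unfold J12; ring).
      rewrite Hbc, Rmult_0_r in Hid.
      assert (Hcb : J21 aL gRL L L = J12 aL gRL L L) by (unfold J21, J12; ring).
      assert (Hda : J22 aL mL gRL L L = J11 aL mL gRL L L) by (unfold J22, J11; ring).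
      split.
      * intros Hstar. unfold stable_star.
        assert (Hb0 : J12 aL gRL L L = 0).
        { apply (Rmult_eq_reg_l (2 * (aL + gRL))); [|lra]. rewrite Rmult_0_r. lra. }
        rewrite Hcb, Hda, Hb0. repeat split; auto.
      * intros Hns.
        assert (Hb0 : J12 aL gRL L L <> 0).
        { intro Hb. rewrite Hb, Rmult_0_r in Hid. apply Hns. lra. }
        split.
        -- unfold stable_node, mdisc, mtr, mdet. repeat split; try lra.
           rewrite Hcb, Hda. pose proof (pow2_ge_0 (J12 aL gRL L L)).
           replace ((J11 aL mL gRL L L + J11 aL mL gRL L L) ^ 2 -
              4 * (J11 aL mL gRL L L * J11 aL mL gRL L L - J12 aL gRL L L * J12 aL gRL L L))
             with (4 * J12 aL gRL L L ^ 2) by ring. lra.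
        -- unfold stable_star. intros [Hb _]. auto.
    + intros _.
      destruct (Rle_lt_dec 0 (mdisc (J11 aL mL gRL L Rr) (J12 aL gRL L Rr) (J21 aR gLR L Rr) (J22 aR mR gLR L Rr))).
      * left. unfold stable_node, mtr, mdet. repeat split; auto; lra.
      * right. unfold stable_focus, mtr. split; auto; lra.
Qed.
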